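(* Let $\mathbf P=UV^\top$ be the transition matrix of a Markov chain on $\{1,\dots,p\}$ with stationary distribution $\pi$ having all entries positive, where $U,V\in\mathbb R^{p\times r}$ are entrywise nonnegative with $U\mathbf 1_r=\mathbf 1_p$, $V^\top\mathbf 1_p=\mathbf 1_r$, each meta-state has an anchor state, and $\mathrm{rank}(U)=r$. Let $\mathbf H=[\mathbf h_1,\dots,\mathbf h_r]$ contain the right singular vectors of $\mathbf Q=\mathrm{diag}(\pi)\mathbf P[\mathrm{diag}(\pi)]^{-1/2}$ associated with its nonzero singular values, assume $\mathbf h_1$ has all coordinates positive, let $\mathbf D=[\mathrm{diag}(\mathbf h_1)]^{-1}[\mathbf h_2,\dots,\mathbf h_r]$ with rows $\mathbf d_1^\top,\dots,\mathbf d_p^\top$, let $\mathbf L\in\mathbb R^{r\times r}$ be the invertible matrix with $\mathbf H=[\mathrm{diag}(\pi)]^{-1/2}V\mathbf L$, with columns $\mathbf l_1,\dots,\mathbf l_r$, and let $\mathbf b_1^\top,\dots,\mathbf b_r^\top$ be the rows of $[\mathrm{diag}(\mathbf l_1)]^{-1}[\mathbf l_2,\dots,\mathbf l_r]$ (the vertices of the simplex $\mathcal S_0^*$ containing all $\mathbf d_j$). Then each row of $\mathbf D$ is a convex combination of $\mathbf b_1,\dots,\mathbf b_r$: for each $j$ there is a unique $\mathbf w_j$ in the standard simplex of $\mathbb R^r$ with $\mathbf d_j=\sum_{k=1}^r\mathbf w_j(k)\mathbf b_k$. Furthermore, the matrix $W\in\mathbb R^{p\times r}$ whose $j$-th row is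 $\mathbf w_j^\top$ satisfies $$[\mathrm{diag}(\mathbf h_1)][\mathrm{diag}(\pi)]^{1/2}W=V[\mathrm{diag}(\mathbf l_1)].$$
   Context: A state $j$ is an anchor state of meta-state $k$ if $V_{jk}>0$ and $V_{js}=0$ for all $s\neq k$. The standard simplex of $\mathbb R^r$ is $\{\mathbf w\in\mathbb R^r:\mathbf w\ge0,\ \sum_k\mathbf w(k)=1\}$. *)

(* Defs.v *)
From HB Require Import structures.
From mathcomp Require Import all_boot all_order all_algebra.
Set Implicit Arguments. Unset Strict Implicit. Unset Printing Implicit Defensive.
Import Order.TTheory GRing.Theory Num.Theory.
Local Open Scope ring_scope.

Section Defs.
Variable R : rcfType.

Definition nonneg_mx (m n : nat) (A : 'M[R]_(m, n)) : Prop :=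
  forall i j, 0 <= A i j.

Definition transition_mx (p : nat) (P : 'M[R]_p) : Prop :=
  nonneg_mx P /\ forall i, \sum_(j < p) P i j = 1.

Definition stationary_distr (p : nat) (P : 'M[R]_p) (pi : 'rV[R]_p) : Prop :=
  (forall i, 0 <= pi 0 i) /\ \sum_(i < p) pi 0 i = 1 /\ pi *m P = pi.

Definition anchor_state (p r : nat) (V : 'M[R]_(p, r)) (j : 'I_p) (k : 'I_r) : Prop :=
  0 < V j k /\ forall s, s != k -> V j s = 0.

Definition std_simplex (r : nat) (w : 'rV[R]_r) : Prop :=
  (forall k, 0 <= w 0 k) /\ \sum_(k < r) w 0 k = 1.

Definition diag_sqrt (p : nat) (pi : 'rV[R]_p) : 'M[R]_p :=
  diag_mx (map_mx (fun x => Num.sqrt x) pi).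
Definition diag_isqrt (p : nat) (pi : 'rV[R]_p) : 'M[R]_p :=
  diag_mx (map_mx (fun x => (Num.sqrt x)^-1) pi).

(* The columns of H (p x r) are right singular vectors of Q associated with
   (all) its nonzero singular values: compact SVD Q = G Sigma H^T with
   G, H having orthonormal columns and Sigma diagonal with positive entries. *)
Definition right_sing_vectors_nonzero (p r : nat) (Q : 'M[R]_p) (H : 'M[R]_(p, r)) : Prop :=
  exists (G : 'M[R]_(p, r)) (s : 'rV[R]_r),
    G^T *m G = 1%:M /\ H^T *m H = 1%:M /\ (forall k, 0 < s 0 k) /\
    Q = G *m diag_mx s *m H^T.

Definition Dmat (p r' : nat) (H : 'M[R]_(p, r'.+1)) : 'M[R]_(p, r') :=
  \matrix_(i < p, j < r') (H i (lift ord0 j) / H i ord0).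

Definition bvec (r' : nat) (L : 'M[R]_(r'.+1)) (k : 'I_r'.+1) : 'rV[R]_r' :=
  \row_(j < r') (L k (lift ord0 j) / L k ord0).

End Defs.

(* Main.v *)
Require Import Defs.
From HB Require Import structures.
From mathcomp Require Import all_boot all_order all_algebra.
From mathcomp Require Import ring lra.
Import Order.TTheory GRing.Theory Num.Theory.
Local Open Scope ring_scope.
Set Implicit Arguments.

Section Helpers.
Variables (R : rcfType) (p r' : nat) (V : 'M[R]_(p, r'.+1)) (pi : 'rV[R]_p)
  (H : 'M[R]_(p, r'.+1)) (L : 'M[R]_(r'.+1)).
Hypothesis pipos : forall i, 0 < pi 0 i.
Hypothesis Vnn : nonneg_mx V.
Hypothesis anch : forall k, exists j, anchor_state V j k.
Hypothesis Hpos : forall i, 0 < H i ord0.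
Hypothesis Lu : L \in unitmx.
Hypothesis HH : H = diag_isqrt pi *m V *m L.

Let A := V *m L.

Lemma sq_pos i : 0 < Num.sqrt (pi 0 i).
Proof. by rewrite sqrtr_gt0. Qed.

Lemma Hform i k : H i k = (Num.sqrt (pi 0 i))^-1 * A i k.
Proof. by rewrite HH -mulmxA /diag_isqrt mul_diag_mx !mxE. Qed.

Lemma Apos i : 0 < A i ord0.
Proof.
have := Hpos i; rewrite Hform => h.
have := sq_pos i => s.
have -> : A i ord0 = Num.sqrt (pi 0 i) * ((Num.sqrt (pi 0 i))^-1 * A i ord0).
  by rewrite mulrA mulfV ?mul1r // gt_eqF.
by rewrite mulr_gt0.
Qed.

Lemma Lpos k : 0 < L k ord0.
Proof.
have [j [Vjk Vjs]] := anch k.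
have := Apos j; rewrite /A mxE (bigD1 k) //= big1 ?addr0.
  by rewrite pmulr_rgt0.
by move=> s sk; rewrite Vjs ?mul0r.
Qed.

Lemma Dform i m : Dmat H i m = A i (lift ord0 m) / A i ord0.
Proof.
rewrite /Dmat mxE !Hform.
have s := sq_pos i; have a := Apos i.
by field; rewrite ?gt_eqF // invr_gt0.
Qed.

Definition wc j : 'rV[R]_r'.+1 := \row_k (V j k * L k ord0 / A j ord0).

Lemma wc_ok j : std_simplex (wc j) /\
  row j (Dmat H) = \sum_(k < r'.+1) wc j 0 k *: bvec L k.
Proof.
split; first split.
- move=> k; rewrite mxE; apply: divr_ge0; last exact: ltW (Apos j).
  by apply: mulr_ge0; [exact: Vnn | exact: ltW (Lpos k)].
- under eq_bigr => k _ do rewrite mxE.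
  have -> : \sum_(k < r'.+1) V j k * L k ord0 / A j ord0 = A j ord0 / A j ord0.
    by rewrite -mulr_suml /A mxE.
  by rewrite mulfV // gt_eqF // Apos.
- apply/rowP => m; rewrite [LHS]mxE Dform summxE /A mxE mulr_suml.
  apply: eq_bigr => k _; rewrite !mxE.
  have := Lpos k => l; have a := Apos j; rewrite /A mxE in a.
  by field; rewrite (gt_eqF l) (gt_eqF a).
Qed.

Lemma w_uniq j (w : 'rV[R]_r'.+1) : \sum_(k < r'.+1) w 0 k = 1 ->
  row j (Dmat H) = \sum_(k < r'.+1) w 0 k *: bvec L k -> w = wc j.
Proof.
move=> ws hw.
set c : 'rV[R]_r'.+1 := \row_k (w 0 k / L k ord0 - V j k / A j ord0).
have a := Apos j.
have cL : c *m L = 0.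
  apply/rowP => i; rewrite !mxE.
  under eq_bigr => k _ do rewrite mxE mulrBl.
  rewrite sumrB.
  case: (unliftP ord0 i) => [m ->|->].
  - have := congr1 (fun v : 'rV_r' => v 0 m) hw; rewrite /= [LHS]mxE Dform summxE.
    move=> e; apply/eqP; rewrite subr_eq0; apply/eqP.
    have -> : \sum_(k < r'.+1) V j k / A j ord0 * L k (lift ord0 m)
      = A j (lift ord0 m) / A j ord0.
      rewrite /A [X in _ = X / _]mxE mulr_suml; apply: eq_bigr => k _; by rewrite mulrAC.
    rewrite e; apply: eq_bigr => k _; rewrite !mxE; by rewrite mulrA mulrAC.
  - have -> : \sum_(k < r'.+1) w 0 k / L k ord0 * L k ord0 = 1.
      rewrite -ws; apply: eq_bigr => k _; by rewrite divfK // gt_eqF // Lpos.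
    have -> : \sum_(k < r'.+1) V j k / A j ord0 * L k ord0 = 1.
      rewrite -(mulfV (lt0r_neq0 a)) {2}/A mxE mulr_suml.
      apply: eq_bigr => k _; by rewrite mulrAC.
    by rewrite subrr.
have c0 : c = 0 by rewrite -(mulmxK Lu c) cL mul0mx.
apply/rowP => k; have := congr1 (fun v : 'rV_r'.+1 => v 0 k) c0.
rewrite /= !mxE => /eqP; rewrite subr_eq0 => /eqP e.
rewrite -[w 0 k](divfK (lt0r_neq0 (Lpos k))) e; by rewrite mulrAC.
Qed.

End Helpers.

Theorem mainTheorem15 (R : rcfType) (p r' : nat)
  (U V : 'M[R]_(p, r'.+1)) (pi : 'rV[R]_p)
  (H : 'M[R]_(p, r'.+1)) (L : 'M[R]_(r'.+1)) :
  transition_mx (U *m V^T) ->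
  stationary_distr (U *m V^T) pi ->
  (forall i, 0 < pi 0 i) ->
  nonneg_mx U -> nonneg_mx V ->
  U *m (const_mx 1 : 'cV[R]_r'.+1) = (const_mx 1 : 'cV[R]_p) ->
  V^T *m (const_mx 1 : 'cV[R]_p) = (const_mx 1 : 'cV[R]_r'.+1) ->
  (forall k, exists j, anchor_state V j k) ->
  \rank U = r'.+1 ->
  right_sing_vectors_nonzero
    (diag_mx pi *m (U *m V^T) *m diag_isqrt pi) H ->
  (forall i, 0 < H i ord0) ->
  L \in unitmx ->
  H = diag_isqrt pi *m V *m L ->
  (forall j : 'I_p, exists! w : 'rV[R]_r'.+1,
     std_simplex w /\ row j (Dmat H) = \sum_(k < r'.+1) w 0 k *: bvec L k) /\
  (forall W : 'M[R]_(p, r'.+1),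
     (forall j : 'I_p, std_simplex (row j W) /\
        row j (Dmat H) = \sum_(k < r'.+1) W j k *: bvec L k) ->
     diag_mx (row 0 H^T) *m diag_sqrt pi *m W = V *m diag_mx (row 0 L^T)).
Proof.
move=> _ _ pipos _ Vnn _ _ anch _ _ Hpos Lu HH.
split.
- move=> j; exists (@wc R p r' V L j); split; first exact: (wc_ok pipos Vnn anch Hpos HH).
  move=> w [[_ ws] hw]; have := w_uniq pipos anch Hpos Lu HH _ ws hw. by move=> ->.
- move=> W hW; rewrite -mulmxA /diag_sqrt !mul_diag_mx mul_mx_diag.
  apply/matrixP => j k; rewrite !mxE.
  have [[_ ws] hw] := hW j.
  have hw' : row j (Dmat H) = \sum_(k < r'.+1) row j W 0 k *: bvec L k.
    by rewrite hw; apply: eq_bigr => i _; rewrite mxE.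
  have e := w_uniq pipos anch Hpos Lu HH _ ws hw'.
  have := congr1 (fun v : 'rV_r'.+1 => v 0 k) e; rewrite /= !mxE => eW.
  rewrite eW.
  rewrite (Hform HH) mxE.
  have s : 0 < Num.sqrt (pi 0 j) by rewrite sqrtr_gt0. have a := Apos pipos Hpos HH j; rewrite mxE in a.
  by field; rewrite (gt_eqF s) (gt_eqF a).
Qed.
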